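(* Let $v_k$ be a joint configuration and suppose the joint configuration graph contains an optimal (minimum-cost collision-free) joint path $\pi_*(v_k,v_F)$ from $v_k$ to the joint goal $v_F$. Then for every subset $\Omega\subset I$ we have $g(\pi'_{\Omega}(v_k,v_F))\le g(\pi_*(v_k,v_F))$. Furthermore, if $\Omega_1\subset\Omega_2\subset I$, then $g(\pi'_{\Omega_1}(v_k,v_F))\le g(\pi'_{\Omega_2}(v_k,v_F))$.
   Context: A set of agents $I=\{1,\dots,n\}$; each agent $i$ moves in a finite graph $G^i=(V^i,E^i)$ with nonnegative edge costs and has goal $v_F^i$. The joint configuration graph is $G=\prod_{i\in I}G^i$, a joint configuration is $v_k=(v_k^i)_{i\in I}$ and $v_F=(v_F^i)_{i\in I}$. The cost $g$ of a joint path (of any subset of agents) is the sum of the costs of the individual agents' paths. Agents may collide according to a fixed collision relation between pairs of agents; a joint path for a set of agents is collision-free if no two agents of that set collide along it. For $\Omega\subseteq I$, $\pi'_\Omega(v_k,v_F)$ denotes the joint path for all of $I$ obtained by letting the agents in $\Omega$ follow a minimum-cost joint path from $v_k^\Omega$ to $v_F^\Omega$ that is collision-free among the agents of $\Omega$ (ignoring the agents outside $\Omega$), and letting each agent $i\notin\Omega$ follow an individually optimal (minimum-cost in $G^i$, ignoring all other agents) path from $v_k^i$ to $v_F^i$. *)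

(* Defs.v *)
From mathcomp Require Import all_boot all_order all_algebra.
Set Implicit Arguments. Unset Strict Implicit. Unset Printing Implicit Defensive.
Import Order.TTheory GRing.Theory Num.Theory.
Local Open Scope ring_scope.

(* Agents are 'I_n; agent i moves in the finite graph with vertex type V i,
   edge relation E i and edge cost c i.  coll i j x x' y y' says that agent i
   moving from x to x' and agent j moving from y to y' during the same time
   step collide (the fixed collision relation between pairs of agents). *)
Section MAPF.
Variable R : realFieldType.
Variable n : nat.
Variable V : 'I_n -> finType.
Variable E : forall i, rel (V i).
Variable c : forall i, V i -> V i -> R.
Variable coll : forall i j : 'I_n, V i -> V i -> V j -> V j -> bool.

Definition config := forall i : 'I_n, V i.

(* An individual path of agent i starting at a is given by the sequence s of
   vertices visited after a (so the vertex list is a :: s). *)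
Definition jpath := forall i : 'I_n, seq (V i).

Fixpoint pcost (i : 'I_n) (a : V i) (s : seq (V i)) {struct s} : R :=
  match s with
  | [::] => 0
  | y :: s' => c a y + pcost y s'
  end.

Definition ipath (i : 'I_n) (a b : V i) (s : seq (V i)) : bool :=
  path (@E i) a s && (last a s == b).

(* position of agent i at time t along the path a :: s
   (an agent that has finished its path stays at its last vertex) *)
Definition pos (i : 'I_n) (a : V i) (s : seq (V i)) (t : nat) : V i :=
  nth (last a s) (a :: s) t.

Definition jpath_on (Om : {set 'I_n}) (v w : config) (p : jpath) : Prop :=
  forall i, i \in Om -> ipath (v i) (w i) (p i).

Definition coll_free (Om : {set 'I_n}) (v : config) (p : jpath) : Prop :=
  forall (t : nat) (i j : 'I_n), i \in Om -> j \in Om -> i != j ->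
    ~~ coll (pos (v i) (p i) t) (pos (v i) (p i) t.+1)
            (pos (v j) (p j) t) (pos (v j) (p j) t.+1).

Definition gOm (Om : {set 'I_n}) (v : config) (p : jpath) : R :=
  \sum_(i in Om) pcost (v i) (p i).

Definition g (v : config) (p : jpath) : R := gOm [set: 'I_n] v p.

Definition opt_jpath (Om : {set 'I_n}) (v w : config) (p : jpath) : Prop :=
  [/\ jpath_on Om v w p, coll_free Om v p &
      forall q, jpath_on Om v w q -> coll_free Om v q ->
        gOm Om v p <= gOm Om v q].

Definition opt_ipath (i : 'I_n) (a b : V i) (s : seq (V i)) : Prop :=
  ipath a b s /\ (forall s', ipath a b s' -> pcost a s <= pcost a s').

Definition combine (Om : {set 'I_n}) (P Q : jpath) : jpath :=
  fun i => if i \in Om then P i else Q i.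

Definition is_pi' (Om : {set 'I_n}) (v w : config) (pi : jpath) : Prop :=
  exists P Q : jpath,
    [/\ opt_jpath Om v w P,
        (forall i, i \notin Om -> opt_ipath (v i) (w i) (Q i)) &
        pi = combine Om P Q].

End MAPF.

(* Main.v *)
Require Import Defs.
From mathcomp Require Import all_boot all_order all_algebra.
Import Order.TTheory GRing.Theory Num.Theory.
Local Open Scope ring_scope.

Lemma key (R : realFieldType) (n : nat) (V : 'I_n -> finType)
  (E : forall i, rel (V i)) (c : forall i, V i -> V i -> R)
  (coll : forall i j : 'I_n, V i -> V i -> V j -> V j -> bool)
  (vk vF : config V) (Om1 Om2 : {set 'I_n}) (pi q : jpath V) :
  Om1 \subset Om2 -> is_pi' E c coll Om1 vk vF pi ->
  jpath_on E [set: 'I_n] vk vF q -> coll_free coll Om2 vk q ->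
  g c vk pi <= g c vk q.
Proof.
move=> sub [P [Q [[hP hPc hPo] hQ ->]]] hq hqc.
rewrite /g /gOm (bigID (fun i => i \in Om1)) [X in _ <= X](bigID (fun i => i \in Om1)) /=.
apply: lerD.
  have e : forall p : jpath V, \sum_(i in [set: 'I_n] | i \in Om1) pcost c (vk i) (p i)
      = gOm c Om1 vk p.
    by move=> p; rewrite /gOm; apply: eq_bigl => i; rewrite in_setT.
  rewrite (e q).
  rewrite [X in X <= _](_ : _ = \sum_(i in [set: 'I_n] | i \in Om1) pcost c (vk i) (P i)).
    rewrite e; apply: hPo.
      by move=> i _; apply: hq; rewrite in_setT.
    by move=> t i j hi hj; apply: hqc; apply: (subsetP sub).
  by apply: eq_bigr => i /andP [_ hi]; rewrite /combine hi.
apply: ler_sum => i /andP [_ hi]; rewrite /combine (negbTE hi).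
by case: (hQ i hi) => _; apply; apply: hq; rewrite in_setT.
Qed.

Theorem lemma8 (R : realFieldType) (n : nat) (V : 'I_n -> finType)
  (E : forall i, rel (V i)) (c : forall i, V i -> V i -> R)
  (coll : forall i j : 'I_n, V i -> V i -> V j -> V j -> bool)
  (c_ge0 : forall i (x y : V i), E i x y -> 0 <= c i x y)
  (vk vF : config V) (pistar : jpath V)
  (hopt : opt_jpath E c coll [set: 'I_n] vk vF pistar) :
  (forall (Om : {set 'I_n}) (pi : jpath V),
     is_pi' E c coll Om vk vF pi -> g c vk pi <= g c vk pistar) /\
  (forall (Om1 Om2 : {set 'I_n}) (pi1 pi2 : jpath V),
     Om1 \subset Om2 ->
     is_pi' E c coll Om1 vk vF pi1 -> is_pi' E c coll Om2 vk vF pi2 ->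
     g c vk pi1 <= g c vk pi2).
Proof.
case: hopt => h1 h2 _; split.
  move=> Om pi hpi; apply: (@key _ _ _ _ _ _ _ _ Om [set: 'I_n] _ _ _ hpi h1 h2).
  exact: subsetT.
move=> Om1 Om2 pi1 pi2 sub hpi1 hpi2; apply: (@key _ _ _ _ _ _ _ _ Om1 Om2 _ _ sub hpi1).
  case: hpi2 => [P [Q [[hP _ _] hQ ->]]] i _; rewrite /combine.
  by case: ifP => hi; [apply: hP | case: (hQ i (negbT hi))].
case: hpi2 => [P [Q [[_ hPc _] _ ->]]] t i j hi hj hij.
by rewrite /combine hi hj; apply: hPc.
Qed.
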